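(* Suppose $\mathcal C$ is a Distribution Problem satisfying Thin Individual Indifference. (a) If $\mathcal D$ is a quota rule with quota $q<n$, then for any selections $\hat\phi_1,\dots,\hat\phi_T$ of $\Phi^{\mathrm{or}}_{\mathcal D}$: if $T\ge\lceil n/(n-q)\rceil$ then $[\hat\phi_1\circ\cdots\circ\hat\phi_T](x)\in X_A^*$ for all $x\in X$. (b) If $\mathcal D$ is a veto-proof voting rule, then for any selections $\hat\phi_1,\dots,\hat\phi_T$ of $\Phi^{\mathrm{or}}_{\mathcal D}$: if $T\ge n$ then $[\hat\phi_1\circ\cdots\circ\hat\phi_T](x)\in X_A^*$ for all $x\in X$.
   Context: Collective choice problem $\mathcal C$: voters $N=\{1,\dots,n\}$, agenda setter $A$, compact metrizable policy space $X$, continuous preferences $\succsim_i$ with continuous utilities $u_i$; $X_A^*=\arg\max_X u_A$. Distribution Problem: for every $x$ and player $i$, (Scarcity) if $u_i(x)<\max_X u_i$ then either some $j\ne i$ has $u_j(x)>\min_X u_j$ or some $y$ has $u_k(y)>u_k(x)$ for all players $k$; (Transferability) if $u_i(x)>\min_X u_i$ then some $y$ has $u_j(y)>u_j(x)$ for all players $j\ne i$. Thin Individual Indifference: for every player $i$ and $x$, $\{y: y\sim_i x\}\setminus\{x\}$ has empty interior. Voting rule: collection $\mathcal D\subseteq 2^N$ of winning coalitions; quota rule with quota $q$: $\mathcal D=\{D\subseteq N:|D|\ge q\}$; veto-proof: for each voter $i$ some $D\in\mathcal D$ has $D\subseteq N\setminus\{i\}$. $M^{w}_{\mathcal D}(x)=\{y:\exists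 D\in\mathcal D,\ y\succsim_i x\ \forall i\in D\}$, $M^{s}_{\mathcal D}(x)=\{y:\exists D\in\mathcal D,\ y\succ_i x\ \forall i\in D\}$, $M^{as}_{\mathcal D}(x)=\mathrm{cl}[M^{s}_{\mathcal D}(x)]\cup\{x\}$, $V_A^{as}(x\mid\mathcal D)=\max_{y\in M^{as}_{\mathcal D}(x)}u_A(y)$, $\Phi^{\mathrm{or}}_{\mathcal D}(x)=\{y\in M^{w}_{\mathcal D}(x): u_A(y)\ge V_A^{as}(x\mid\mathcal D)\}$. A selection of $\Phi^{\mathrm{or}}_{\mathcal D}$ is a map $\hat\phi:X\to X$ with $\hat\phi(x)\in\Phi^{\mathrm{or}}_{\mathcal D}(x)$ for all $x$. *)

(* Defs.v *)
From HB Require Import structures.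
From mathcomp Require Import all_boot all_order all_algebra.
From mathcomp Require Import all_classical all_reals all_analysis.
Set Implicit Arguments. Unset Strict Implicit. Unset Printing Implicit Defensive.
Import Order.TTheory GRing.Theory Num.Theory.
Local Open Scope classical_set_scope.
Local Open Scope ring_scope.

Section Defs.
Variables (R : realType) (X : topologicalType) (n : nat).

(* Players: voters [Some i] (i : 'I_n) and the agenda setter [None]. *)
Definition pu (u : 'I_n -> X -> R) (uA : X -> R) (p : option 'I_n) : X -> R :=
  match p with Some i => u i | None => uA end.

(* u x < max_X u, and u x > min_X u (max/min attained by compactness). *)
Definition below_max (f : X -> R) (x : X) : Prop := exists y, f x < f y.
Definition above_min (f : X -> R) (x : X) : Prop := exists y, f y < f x.

Definition distribution_problem (u : 'I_n -> X -> R) (uA : X -> R) : Prop :=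
  forall (x : X) (i : option 'I_n),
    (below_max (pu u uA i) x ->
       (exists j, j <> i /\ above_min (pu u uA j) x) \/
       (exists y, forall k, pu u uA k x < pu u uA k y)) /\
    (above_min (pu u uA i) x ->
       exists y, forall j, j <> i -> pu u uA j x < pu u uA j y).

Definition thin_indifference (u : 'I_n -> X -> R) (uA : X -> R) : Prop :=
  forall (i : option 'I_n) (x : X),
    interior ([set y | pu u uA i y = pu u uA i x] `\ x) = set0.

Definition argmaxA (uA : X -> R) : set X := [set x | forall y, uA y <= uA x].

Definition quota_rule (q : nat) : set {set 'I_n} := [set S | (q <= #|S|)%N].

Definition veto_proof (D : set {set 'I_n}) : Prop :=
  forall i : 'I_n, exists S, D S /\ S \subset [set~ i].

(* y ≿_i x  iff  u_i x <= u_i y *)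
Definition Mw (u : 'I_n -> X -> R) (D : set {set 'I_n}) (x : X) : set X :=
  [set y | exists S, D S /\ forall i, i \in S -> u i x <= u i y].
Definition Ms (u : 'I_n -> X -> R) (D : set {set 'I_n}) (x : X) : set X :=
  [set y | exists S, D S /\ forall i, i \in S -> u i x < u i y].
Definition Mas (u : 'I_n -> X -> R) (D : set {set 'I_n}) (x : X) : set X :=
  closure (Ms u D x) `|` [set x].

Definition Phi_or (u : 'I_n -> X -> R) (uA : X -> R) (D : set {set 'I_n})
  (x : X) : set X :=
  [set y | Mw u D x y /\ forall z, Mas u D x z -> uA z <= uA y].

Definition is_selection (u : 'I_n -> X -> R) (uA : X -> R)
  (D : set {set 'I_n}) (phi : X -> X) : Prop :=
  forall x, Phi_or u uA D x (phi x).

(* [phi_1 o ... o phi_T] for fs = [:: phi_1; ...; phi_T] *)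
Definition compose_all (fs : seq (X -> X)) : X -> X := foldr (fun f g => f \o g) id fs.

End Defs.

(* Main.v *)
Require Import Defs.
From HB Require Import structures.
From mathcomp Require Import all_boot all_order all_algebra.
From mathcomp Require Import all_classical all_reals all_analysis.
Import Order.TTheory GRing.Theory Num.Theory numFieldTopology.Exports.
Local Open Scope classical_set_scope.
Local Open Scope ring_scope.
Set Implicit Arguments. Unset Strict Implicit.

Lemma near_gt (R : realType) (X : metricType R) (f : X -> R) (c : R) (z : X) :
  continuous f -> c < f z -> \forall w \near z, c < f w.
Proof.
move=> cf czf; have := cf z [set r | c < r]; apply.
apply: open_nbhs_nbhs; split => //; exact: open_gt.
Qed.

Lemma near_neq (R : realType) (X : metricType R) (x z : X) :
  z <> x -> \forall w \near z, w <> x.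
Proof.
move=> zx; have cx : closed [set x].
  exact/accessible_closed_set1/hausdorff_accessible/metric_hausdorff.
apply: open_nbhs_nbhs; split; first exact: closed_openC.
by [].
Qed.

Lemma mas_le (R : realType) (X : metricType R) (n : nat)
  (u : 'I_n -> X -> R) (uA : X -> R) D x y S w :
  Phi_or u uA D x y -> D S -> (forall i, i \in S -> u i x < u i w) -> uA w <= uA y.
Proof.
move=> [_ H] DS Hw; apply: H; left; apply: subset_closure; exists S; split => //.
Qed.

Lemma notmax (R : realType) (X : metricType R) (uA : X -> R) y :
  ~ argmaxA uA y -> exists z, uA y < uA z.
Proof.
move=> H; apply: contrapT => H2; apply: H => z.
by rewrite leNgt; apply/negP => yz; apply: H2; exists z.
Qed.

Lemma mw_wit (R : realType) (X : metricType R) (n : nat)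
  (u : 'I_n -> X -> R) (uA : X -> R) D x y :
  Phi_or u uA D x y -> exists S, D S /\ forall i, i \in S -> u i x <= u i y.
Proof. by case. Qed.


Lemma core (R : realType) (X : metricType R) (n : nat)
  (u : 'I_n -> X -> R) (uA : X -> R) D x y :
  (forall i, continuous (u i)) -> continuous uA ->
  distribution_problem u uA -> thin_indifference u uA ->
  Phi_or u uA D x y -> ~ argmaxA uA y ->
  [/\ (exists j, above_min (u j) y),
      (forall j S, above_min (u j) y -> D S -> j \notin S ->
          (forall i, i \in S -> u i x <= u i y) -> False) &
      (forall i, above_min (u i) y -> above_min (u i) x)].
Proof.
move=> cu cA dp thin Phi nmax.
have [S [DS HS]] := mw_wit Phi.
have [z yz] := notmax nmax.
split.
- have [] := (dp y None).1 (ex_intro _ z yz).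
    by case=> [[i|] [ne am]] //; exists i.
  move=> [w Hw]; exfalso.
  have yw := Hw None; rewrite /= in yw.
  suff : uA w <= uA y by rewrite leNgt yw.
  apply: (mas_le Phi DS) => i iS.
  exact: le_lt_trans (HS i iS) (Hw (Some i)).
- move=> j T amj DT jT HT.
  have [w Hw] := (dp y (Some j)).2 amj.
  have /= yw := Hw None ltac:(by []).
  suff : uA w <= uA y by rewrite leNgt yw.
  apply: (mas_le Phi DT) => i iT.
  apply: le_lt_trans (HT i iT) (Hw (Some i) _) => -[ij]; subst i.
  by rewrite iT in jT.
- move=> i ami; apply: contrapT => nx.
  have xmin : forall w, u i x <= u i w.
    by move=> w; rewrite leNgt; apply/negP => wx; apply: nx; exists w.
  have [z' Hz] := (dp y (Some i)).2 ami.
  have [[w [yw [Hk iw]]]|Hno] :=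
    pselect (exists w, uA y < uA w /\ (forall k, k != i -> u k y < u k w) /\ u i x < u i w).
    suff : uA w <= uA y by rewrite leNgt yw.
    apply: (mas_le Phi DS) => k kS.
    have [->//|ki] := eqVneq k i.
    exact: le_lt_trans (HS k kS) (Hk k ki).
  have Heq : forall w, uA y < uA w -> (forall k, k != i -> u k y < u k w) -> u i w = u i x.
    move=> w yw Hk; apply/eqP; rewrite eq_le xmin andbT leNgt; apply/negP => xw.
    by apply: Hno; exists w.
  have /= yz' := Hz None ltac:(by []).
  have [zx|zx] := pselect (z' = x).
    subst z'; have [_ H] := Phi.
    by have := H x (or_intror erefl); rewrite leNgt yz'.
  have := thin (Some i) x; rewrite /= => th.
  have : interior ([set w | u i w = u i x] `\ x) z'.
    rewrite /interior.
    near=> w; split.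
      apply: Heq; first by near: w; exact: near_gt.
      near: w.
      apply: (@filter_forall _ _ (fun k w => k != i -> u k y < u k w)) => k.
      have [->|ki] := eqVneq k i; first by apply: nearW.
      apply: filterS (near_gt (cu k) (Hz (Some k) _)) => [w0 H _ //|].
      by move=> -[ki']; subst k; rewrite eqxx in ki.
    near: w; exact: near_neq.
  by rewrite th.
Unshelve. all: by end_near.
Qed.

Definition Pset (R : realType) (X : metricType R) (n : nat)
  (u : 'I_n -> X -> R) (y : X) : {set 'I_n} := finset (fun i => `[< above_min (u i) y >]).

Definition Wset (R : realType) (X : metricType R) (n : nat)
  (u : 'I_n -> X -> R) (x y : X) : {set 'I_n} := finset (fun i => u i x <= u i y).

Lemma Py_sub (R : realType) (X : metricType R) (n : nat)
  (u : 'I_n -> X -> R) (uA : X -> R) D x y :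
  (forall i, continuous (u i)) -> continuous uA ->
  distribution_problem u uA -> thin_indifference u uA ->
  Phi_or u uA D x y -> ~ argmaxA uA y ->
  [/\ (0 < #|Pset u y|)%N, Pset u y \subset Pset u x,
   Pset u y \subset Wset u x y,
   ~: Pset u x \subset Wset u x y &
   (forall j S, j \in Pset u y -> D S -> j \notin S ->
          S \subset Wset u x y -> False)].
Proof.
move=> cu cA dp thin Phi nmax.
have [[j amj] c2 c3] := core cu cA dp thin Phi nmax.
have c2' : forall j S, j \in Pset u y -> D S -> j \notin S ->
          S \subset Wset u x y -> False.
  move=> j' S; rewrite inE => /asboolP amj' DS jS /fintype.subsetP SW.
  by apply: (c2 j' S amj' DS jS) => i /SW; rewrite inE.
have [S [DS HS]] := mw_wit Phi.
split => //.
- by apply/card_gt0P; exists j; rewrite inE; apply/asboolP.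
- apply/fintype.subsetP => i; rewrite !inE => amy; exact: c3.
- apply/fintype.subsetP => i iP; rewrite inE.
  have [iS|iS] := boolP (i \in S); first exact: HS.
  exfalso; apply: (c2' i S iP DS iS); apply/fintype.subsetP => k kS; rewrite inE.
  exact: HS.
- apply/fintype.subsetP => i; rewrite !inE => /asboolP nam.
  rewrite leNgt; apply/negP => yx; apply: nam; by exists y.
Qed.

From mathcomp Require Import zify.

Lemma cardW (n : nat) (Py Px W : {set 'I_n}) :
  Py \subset Px -> Py \subset W -> ~: Px \subset W ->
  (#|Py| + (n - #|Px|) <= #|W|)%N.
Proof.
move=> h1 h2 h3.
have e1 := cardsID Px W.
have e2 : W :\: Px = ~: Px by rewrite finset.setDE; apply/finset.setIidPr.
have e3 := cardsC Px; rewrite card_ord in e3.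
have e4 : (#|Py| <= #|W :&: Px|)%N by apply: subset_leq_card; rewrite finset.subsetI h2.
rewrite e2 in e1; lia.
Qed.

Lemma step_a (R : realType) (X : metricType R) (n : nat)
  (u : 'I_n -> X -> R) (uA : X -> R) q x y :
  (forall i, continuous (u i)) -> continuous uA ->
  distribution_problem u uA -> thin_indifference u uA ->
  Phi_or u uA (@quota_rule n q) x y -> ~ argmaxA uA y ->
  (0 < #|Pset u y|)%N /\ (#|Pset u y| + (n - q) <= #|Pset u x|)%N.
Proof.
move=> cu cA dp thin Phi nmax.
have [pos PyPx PyW ZW c2] := Py_sub cu cA dp thin Phi nmax.
split => //.
have [j jP] := card_gt0P pos.
have lt : ~ (q <= #|Wset u x y :\ j|)%N.
  move=> h; apply: (c2 j (Wset u x y :\ j) jP) => //.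
    by rewrite !inE eqxx.
  exact: subsetDl.
have e1 := cardsD1 j (Wset u x y); rewrite (fintype.subsetP PyW _ jP) add1n in e1.
have := cardW PyPx PyW ZW.
have : (#|Pset u x| <= n)%N by have := max_card (Pset u x); rewrite card_ord.
have := subset_leq_card PyPx.
move=> h0 h1 h2; set a := #|Pset u y| in h0 h2 *; set b := #|Pset u x| in h0 h1 h2 *; set c := #|Wset u x y| in h2 e1; set d := #|Wset u x y :\ j| in e1 lt. clearbody a b c d; lia.
Qed.

Lemma step_b (R : realType) (X : metricType R) (n : nat)
  (u : 'I_n -> X -> R) (uA : X -> R) D x y :
  (forall i, continuous (u i)) -> continuous uA ->
  distribution_problem u uA -> thin_indifference u uA -> veto_proof D ->
  Phi_or u uA D x y -> ~ argmaxA uA y ->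
  (0 < #|Pset u y|)%N /\ (#|Pset u y| + 1 <= #|Pset u x|)%N.
Proof.
move=> cu cA dp thin veto Phi nmax.
have [pos PyPx PyW ZW c2] := Py_sub cu cA dp thin Phi nmax.
split => //.
have [j jP] := card_gt0P pos.
have [k kW] : exists k, k \notin Wset u x y.
  apply: contrapT => H.
  have [S [DS Sj]] := veto j.
  apply: (c2 j S jP DS).
    by apply/negP => jS; have := fintype.subsetP Sj j jS; rewrite !inE; apply.
  apply/fintype.subsetP => i _; apply: contrapT => iW; apply: H; exists i.
  exact/negP.
have kPx : k \in Pset u x.
  move: kW; rewrite !inE -ltNge => yx; by exists y.
have kPy : k \notin Pset u y.
  by apply/negP => /(fintype.subsetP PyW); rewrite (negPf kW).
have sub : Pset u y \subset Pset u x :\ k.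
  apply/fintype.subsetP => i iP; have := fintype.subsetP PyPx _ iP; rewrite !inE => h; apply/andP; split; last by apply/asboolP.
  by apply/eqP => ik; subst i; rewrite iP in kPy.
have := subset_leq_card sub.
have := cardsD1 k (Pset u x); rewrite kPx.
lia.
Qed.

Lemma iter_gen (R : realType) (X : metricType R) (n : nat)
  (u : 'I_n -> X -> R) (uA : X -> R) D (d : nat) :
  (forall x y, Phi_or u uA D x y -> ~ argmaxA uA y ->
     (0 < #|Pset u y|)%N /\ (#|Pset u y| + d <= #|Pset u x|)%N) ->
  forall fs : seq (X -> X),
  (forall k, (k < size fs)%N -> is_selection u uA D (nth id fs k)) ->
  forall x, argmaxA uA (compose_all fs x) \/
            (#|Pset u (compose_all fs x)| + size fs * d <= n)%N.
Proof.
move=> step; elim => [|f fs IH] sel x.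
  by right; rewrite mul0n addn0 /=; have := max_card (Pset u x); rewrite card_ord.
have sel' : forall k, (k < size fs)%N -> is_selection u uA D (nth id fs k).
  by move=> k kl; apply: (sel k.+1).
have Phi : Phi_or u uA D (compose_all fs x) (compose_all (f :: fs) x).
  exact: (sel 0%N).
have [am|bd] := IH sel' x.
  left => z; apply: le_trans (am z) _.
  by case: Phi => _ /(_ (compose_all fs x) (or_intror erefl)).
have [am'|nam] := pselect (argmaxA uA (compose_all (f :: fs) x)); first by left.
right; have [_ h] := step _ _ Phi nam.
move: h bd; rewrite /= mulSn.
set a := #|_|; set b := #|_|; clearbody a b; lia.
Qed.

Lemma final_gen (R : realType) (X : metricType R) (n : nat)
  (u : 'I_n -> X -> R) (uA : X -> R) D (d : nat) :
  (forall x y, Phi_or u uA D x y -> ~ argmaxA uA y ->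
     (0 < #|Pset u y|)%N /\ (#|Pset u y| + d <= #|Pset u x|)%N) ->
  forall fs : seq (X -> X),
  (forall k, (k < size fs)%N -> is_selection u uA D (nth id fs k)) ->
  (0 < size fs)%N -> (n <= size fs * d)%N ->
  forall x, argmaxA uA (compose_all fs x).
Proof.
move=> step fs sel pos le x.
have [//|bd] := iter_gen step sel x.
apply: contrapT => nam.
case: fs sel pos le bd nam => // f fs sel _ le bd nam.
have Phi : Phi_or u uA D (compose_all fs x) (compose_all (f :: fs) x).
  exact: (sel 0%N).
have [h _] := step _ _ Phi nam.
move: h bd le; set a := #|_|; set s := size _; clearbody a s; lia.
Qed.

Lemma ceil_nat (R : realType) (n q s : nat) : (q < n)%N ->
  (Num.ceil ((n%:R : R) / (n - q)%:R) <= s%:R)%R -> (n <= s * (n - q))%N.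
Proof.
move=> qn hc.
have h : (n%:R / (n - q)%:R : R) <= s%:R.
  apply: le_trans (ceil_ge _) _.
  have -> : (s%:R : R) = (s%:R : int)%:~R by rewrite natz pmulrn.
  by rewrite ler_int.
rewrite ler_pdivrMr ?ltr0n ?subn_gt0 // -natrM ler_nat in h.
exact: h.
Qed.

Theorem lemma10 (R : realType) (X : metricType R) (n : nat)
  (u : 'I_n -> X -> R) (uA : X -> R) :
  (0 < n)%N ->
  compact [set: X] ->
  (forall i, continuous (u i)) -> continuous uA ->
  distribution_problem u uA -> thin_indifference u uA ->
  (* (a) quota rules *)
  (forall (q : nat), (q < n)%N ->
     forall fs : seq (X -> X),
       (forall k, (k < size fs)%N -> is_selection u uA (@quota_rule n q) (nth id fs k)) ->
       (Num.ceil ((n%:R : R) / (n - q)%:R) <= (size fs)%:R)%R ->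
       forall x, argmaxA uA (compose_all fs x)) /\
  (* (b) veto-proof rules *)
  (forall D : set {set 'I_n}, veto_proof D ->
     forall fs : seq (X -> X),
       (forall k, (k < size fs)%N -> is_selection u uA D (nth id fs k)) ->
       (n <= size fs)%N ->
       forall x, argmaxA uA (compose_all fs x)).
Proof.
move=> n0 _ cu cA dp thin; split.
- move=> q qn fs sel hc x.
  have le := ceil_nat qn hc.
  have pos : (0 < size fs)%N.
    move: le; case: (size fs) => //; rewrite mul0n leqn0 => /eqP n00.
    by rewrite n00 in n0.
  apply: (final_gen (u := u) (d := (n - q)%N) _ sel pos le).
  by move=> x0 y0 Phi nam; apply: (step_a cu cA dp thin Phi nam).
- move=> D veto fs sel le x.
  have pos : (0 < size fs)%N by exact: leq_trans n0 le.
  apply: (final_gen (u := u) (d := 1%N) _ sel pos); first last.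
    by rewrite muln1.
  by move=> x0 y0 Phi nam; apply: (step_b cu cA dp thin veto Phi nam).
Qed.
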